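(* Let $\sigma = 2$. For every Parikh vector $P \in \mathbb{N}_0^{2}$ and every word $w \in \Sigma^{*|_P}$, there exists a Hamiltonian path in the configuration graph $G(P)$ starting at $w$.
   Context: Alphabet $\Sigma = \{1,2\}$. For $P \in \mathbb{N}_0^2$, $n := P[1]+P[2]$ and $\Sigma^{*|_P}$ is the set of words of length $n$ with exactly $P[1]$ occurrences of $1$ and $P[2]$ occurrences of $2$. For a word $w$ and $i\neq j$ with $w[i]\neq w[j]$, the 2-swap $w\circ(i,j)$ exchanges the symbols at positions $i$ and $j$. The configuration graph $G(P)$ has vertex set $\Sigma^{*|_P}$ and an edge $\{w,u\}$ whenever $u = w\circ(i,j)$ for some 2-swap. A Hamiltonian path starting at $w$ is a path beginning at $w$ that visits every vertex exactly once. *)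

(* Defs.v *)
From mathcomp Require Import all_boot.
Set Implicit Arguments. Unset Strict Implicit. Unset Printing Implicit Defensive.

(* Alphabet Sigma = {1,2}; words are sequences of naturals over {1,2}.
   A Parikh vector P in N_0^2 is a pair (P[1], P[2]). *)

(* w belongs to Sigma^{*|_P}: length P[1]+P[2], exactly P[1] ones and P[2] twos
   (this forces every letter to be 1 or 2). *)
Definition in_words (P : nat * nat) (w : seq nat) : Prop :=
  size w = P.1 + P.2 /\ count_mem 1 w = P.1 /\ count_mem 2 w = P.2.

Definition swap2 (w : seq nat) (i j : nat) : seq nat :=
  set_nth 0 (set_nth 0 w i (nth 0 w j)) j (nth 0 w i).

Definition swap_adj (w u : seq nat) : Prop :=
  exists i j, i < size w /\ j < size w /\ i <> j /\
              nth 0 w i <> nth 0 w j /\ u = swap2 w i j.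

Definition G_edge (P : nat * nat) (w u : seq nat) : Prop :=
  in_words P w /\ in_words P u /\ swap_adj w u.

Definition hamiltonian_path_from (P : nat * nat) (w : seq nat) (p : seq (seq nat)) : Prop :=
  p <> [::] /\ head [::] p = w /\ uniq p /\
  (forall u, u \in p -> in_words P u) /\
  (forall u, in_words P u -> u \in p) /\
  (forall k, k.+1 < size p -> G_edge P (nth [::] p k) (nth [::] p k.+1)).

(* Main.v *)
Require Import Defs.
From mathcomp Require Import all_boot.
From mathcomp Require Import zify.
Set Implicit Arguments. Unset Strict Implicit.

Definition ham (V : seq nat -> Prop) (w : seq nat) (p : seq (seq nat)) :=
  p <> [::] /\ head [::] p = w /\ uniq p /\
  (forall u, u \in p -> V u) /\ (forall u, V u -> u \in p) /\
  (forall k, k.+1 < size p -> swap_adj (nth [::] p k) (nth [::] p k.+1)).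

Definition lift (c : nat) (V : seq nat -> Prop) u := exists u', u = c :: u' /\ V u'.

Lemma swap_adj_cons c u v : swap_adj u v -> swap_adj (c :: u) (c :: v).
Proof.
move=> [i [j [Hi [Hj [Hij [Hn ->]]]]]].
exists i.+1, j.+1; split; first by []. split; first by [].
split; first by move=> [].
by split.
Qed.

Lemma ham_map c V w p : ham V w p -> ham (lift c V) (c :: w) (map (cons c) p).
Proof.
move=> [Hne [Hh [Hu [Hin [Hcov He]]]]].
split; first by case: p Hne {Hh Hu Hin Hcov He}.
split; first by case: p Hne Hh {Hu Hin Hcov He} => //= q r _ ->.
split; first by rewrite map_inj_uniq // => x y [].
split; first by move=> u /mapP [u' Hu' ->]; exists u'; split => //; apply: Hin.
split; first by move=> u [u' [-> Hv]]; apply: map_f; apply: Hcov.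
move=> k; rewrite size_map => Hk.
rewrite (nth_map [::]) ?(nth_map [::]) //; last by apply: ltnW.
by apply: swap_adj_cons; apply: He.
Qed.

Lemma ham_cat V1 V2 V w1 w2 p1 p2 :
  ham V1 w1 p1 -> ham V2 w2 p2 ->
  (forall u, V u <-> V1 u \/ V2 u) -> (forall u, V1 u -> V2 u -> False) ->
  swap_adj (last [::] p1) w2 -> ham V w1 (p1 ++ p2).
Proof.
move=> [Hne1 [Hh1 [Hu1 [Hin1 [Hcov1 He1]]]]] [Hne2 [Hh2 [Hu2 [Hin2 [Hcov2 He2]]]]] HV Hd Hj.
split; first by case: p1 Hne1 {Hh1 Hu1 Hin1 Hcov1 He1 Hj}.
split; first by case: p1 Hne1 Hh1 {Hu1 Hin1 Hcov1 He1 Hj}.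
split.
  rewrite cat_uniq Hu1 Hu2 /= andbT; apply/hasP => [[u Hu2' Hu1']].
  by apply: (Hd u); [apply: Hin1 | apply: Hin2].
split; first by move=> u; rewrite mem_cat => /orP [/Hin1|/Hin2] H; apply/HV; tauto.
split; first by move=> u /HV [/Hcov1|/Hcov2] H; rewrite mem_cat H ?orbT.
move=> k; rewrite size_cat => Hk; rewrite !nth_cat.
case: (ltnP k.+1 (size p1)) => Hk1.
  by rewrite (ltn_trans (ltnSn k) Hk1); apply: He1.
case: (ltnP k (size p1)) => Hk2.
  have Ek : k = (size p1).-1 by lia.
  have -> : k.+1 - size p1 = 0 by lia.
  rewrite Ek nth_last nth0.
  by case: p2 Hne2 Hh2 {Hu2 Hin2 Hcov2 He2 Hk Hk1 Hk2 Ek} => //= q r _ ->.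
have -> : k.+1 - size p1 = (k - size p1).+1 by lia.
apply: He2; lia.
Qed.

Lemma count12 s : count_mem 1 s + count_mem 2 s <= size s.
Proof. elim: s => //= x s IH; case: eqP; case: eqP; lia. Qed.

Lemma letter a b c u : in_words (a, b) (c :: u) -> c = 1 \/ c = 2.
Proof.
rewrite /in_words /= => [[Hs [H1 H2]]].
have := count12 u.
case: (eqVneq c 1) => [->|n1]; first by left.
case: (eqVneq c 2) => [->|n2]; first by right.
move: H1 H2; rewrite (negbTE n1) (negbTE n2) /=; lia.
Qed.

Lemma decomp a b u : 0 < a -> 0 < b ->
  (in_words (a, b) u <-> lift 1 (in_words (a.-1, b)) u \/ lift 2 (in_words (a, b.-1)) u).
Proof.
move=> Ha Hb; split.
  case: u => [|c u].
    by rewrite /in_words /= => [[Hs _]]; lia.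
  move=> H; case: (letter H) => Ec; subst c; move: H; rewrite /in_words /=.
    by move=> [Hs [H1 H2]]; left; exists u; split => //=; lia.
  by move=> [Hs [H1 H2]]; right; exists u; split => //=; lia.
by move=> [[u' [-> [Hs [H1 H2]]]]|[u' [-> [Hs [H1 H2]]]]]; rewrite /in_words /=; simpl in *; lia.
Qed.

Lemma disj a b u : lift 1 (in_words (a.-1, b)) u -> lift 2 (in_words (a, b.-1)) u -> False.
Proof. by move=> [u1 [-> _]] [u2 [[]]]. Qed.

Lemma set_nth_cat (x1 x2 : seq nat) d c :
  set_nth 0 (x1 ++ d :: x2) (size x1) c = x1 ++ c :: x2.
Proof. by elim: x1 => //= y x1 ->. Qed.

Lemma nth_cat_mid (x1 x2 : seq nat) d : nth 0 (x1 ++ d :: x2) (size x1) = d.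
Proof. by elim: x1. Qed.

Lemma junction c d x1 x2 : c <> d ->
  swap_adj (c :: x1 ++ d :: x2) (d :: x1 ++ c :: x2).
Proof.
move=> Hcd; exists 0, (size x1).+1.
rewrite /= size_cat /=; do 3! (split; first lia).
rewrite nth_cat_mid; split => //.
by rewrite /swap2 /= nth_cat_mid set_nth_cat.
Qed.

Lemma uniq_word a b u v : (a = 0 \/ b = 0) -> in_words (a, b) u -> in_words (a, b) v -> u = v.
Proof.
move=> [->|->] [Hs [H1 H2]] [Hs' [H1' H2']] /=.
  have Au : all (pred1 2) u by rewrite all_count; apply/eqP; simpl in *; lia.
  have Av : all (pred1 2) v by rewrite all_count; apply/eqP; simpl in *; lia.
  by rewrite (all_pred1P _ _ Au) (all_pred1P _ _ Av); simpl in *; rewrite Hs Hs'.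
have Au : all (pred1 1) u by rewrite all_count; apply/eqP; simpl in *; lia.
have Av : all (pred1 1) v by rewrite all_count; apply/eqP; simpl in *; lia.
by rewrite (all_pred1P _ _ Au) (all_pred1P _ _ Av); simpl in *; rewrite Hs Hs'.
Qed.

Lemma last_in V w p : ham V w p -> V (last [::] p).
Proof.
move=> [Hne [_ [_ [Hin _]]]]; apply: Hin.
by case: p Hne => //= q r _; apply: mem_last.
Qed.

Lemma has_letter d (x : seq nat) : 0 < count_mem d x -> exists x1 x2, x = x1 ++ d :: x2.
Proof.
rewrite -has_count has_pred1 => /splitPr [x1 x2]; by exists x1, x2.
Qed.

Lemma main n : forall a b w, a + b = n -> in_words (a, b) w ->
  exists p, ham (in_words (a, b)) w p.
Proof.
elim: n => [|n IH] a b w Hn Hw.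
  exists [:: w]; split => //; split => //; split => //; split.
    by move=> u; rewrite inE => /eqP ->.
  split; last by [].
  by move=> u Hu; rewrite inE (uniq_word _ Hu Hw) //; lia.
case: (posnP a) => [Ha|Ha]; last case: (posnP b) => [Hb|Hb].
- exists [:: w]; split => //; split => //; split => //; split.
    by move=> u; rewrite inE => /eqP ->.
  split; last by [].
  by move=> u Hu; rewrite inE (uniq_word _ Hu Hw) //; left.
- exists [:: w]; split => //; split => //; split => //; split.
    by move=> u; rewrite inE => /eqP ->.
  split; last by [].
  by move=> u Hu; rewrite inE (uniq_word _ Hu Hw) //; right.
have := Hw; rewrite (decomp _ Ha Hb) => [[[w' [Ew Hw']]|[w' [Ew Hw']]]]; subst w.
- have [p1 Hp1] := IH _ _ _ (ltac:(lia) : a.-1 + b = n) Hw'.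
  have [Hs [H1 H2]] := last_in Hp1.
  have [x1 [x2 Ex]] := has_letter (d:=2) (x:=last [::] p1) ltac:(simpl in *; lia).
  have Hy : in_words (a, b.-1) (x1 ++ 1 :: x2).
    move: Hs H1 H2; rewrite Ex /in_words /= !size_cat !count_cat /=; lia.
  have [p2 Hp2] := IH _ _ _ (ltac:(lia) : a + b.-1 = n) Hy.
  exists (map (cons 1) p1 ++ map (cons 2) p2).
  apply: (ham_cat (ham_map 1 Hp1) (ham_map 2 Hp2)).
  + by move=> u; apply: decomp.
  + by apply: disj.
  + have -> : last [::] (map (cons 1) p1) = 1 :: last [::] p1.
      by case: Hp1 => Hne _; case: p1 Hne {Ex Hs H1 H2 Hy} => //= q r _; rewrite last_map.
    by rewrite Ex; apply: junction.
- have [p1 Hp1] := IH _ _ _ (ltac:(lia) : a + b.-1 = n) Hw'.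
  have [Hs [H1 H2]] := last_in Hp1.
  have [x1 [x2 Ex]] := has_letter (d:=1) (x:=last [::] p1) ltac:(simpl in *; lia).
  have Hy : in_words (a.-1, b) (x1 ++ 2 :: x2).
    move: Hs H1 H2; rewrite Ex /in_words /= !size_cat !count_cat /=; lia.
  have [p2 Hp2] := IH _ _ _ (ltac:(lia) : a.-1 + b = n) Hy.
  exists (map (cons 2) p1 ++ map (cons 1) p2).
  apply: (ham_cat (ham_map 2 Hp1) (ham_map 1 Hp2)).
  + by move=> u; rewrite decomp //; tauto.
  + by move=> u H1' H2'; apply: (disj H2' H1').
  + have -> : last [::] (map (cons 2) p1) = 2 :: last [::] p1.
      by case: Hp1 => Hne _; case: p1 Hne {Ex Hs H1 H2 Hy} => //= q r _; rewrite last_map.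
    by rewrite Ex; apply: junction.
Qed.

Theorem theorem2 (P : nat * nat) (w : seq nat) :
  in_words P w -> exists p : seq (seq nat), hamiltonian_path_from P w p.
Proof.
case: P => a b Hw.
have [p [Hne [Hh [Hu [Hin [Hcov He]]]]]] := main (erefl (a + b)) Hw.
exists p; split => //; split => //; split => //; split => //; split => //.
move=> k Hk; split; first by apply: Hin; apply: mem_nth; exact: ltnW.
split; first by apply: Hin; apply: mem_nth.
by apply: He.
Qed.
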